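(* Let $E$ be a topological space, let $\Omega\subseteq E$ be a non-empty relatively compact open set with $\partial\Omega\neq\emptyset$, and let $Y$ be a real locally convex Hausdorff topological vector space. Let $g:\overline{\Omega}\to Y$ be continuous and let $f=g|_{\Omega}$. Then the following are equivalent: (c1) $f$ satisfies the convex hull-like property in $\Omega$; (c2) $g$ satisfies the convex hull property in $\overline{\Omega}$, i.e. $g(\Omega)\subseteq\overline{\mathrm{conv}}(g(\partial\Omega))$.
   Context: $\overline{\Omega}$ and $\partial\Omega$ are the closure and boundary of $\Omega$ in $E$; $\overline{\mathrm{conv}}(S)$ is the closed convex hull of $S$. A function $\psi:Y\to\mathbf{R}$ is quasi-convex if for each $r\in\mathbf{R}$ the set $\psi^{-1}(]-\infty,r])$ is convex. A continuous function $f:\Omega\to Y$ satisfies the convex hull-like property in $\Omega$ if for every continuous quasi-convex $\psi:Y\to\mathbf{R}$ there exists $x^*\in\partial\Omega$ such that $\limsup_{x\to x^*,\,x\in\Omega}\psi(f(x))=\sup_{x\in\Omega}\psi(f(x))$. *)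

(* Defs.v *)
From HB Require Import structures.
From mathcomp Require Import all_boot all_order all_algebra.
From mathcomp Require Import all_classical all_reals all_analysis.
Set Implicit Arguments. Unset Strict Implicit. Unset Printing Implicit Defensive.
Import Order.TTheory GRing.Theory Num.Theory numFieldTopology.Exports.
Local Open Scope classical_set_scope.
Local Open Scope ring_scope.

Definition boundary (T : topologicalType) (A : set T) : set T :=
  closure A `\` interior A.

Definition relatively_compact (T : topologicalType) (A : set T) : Prop :=
  compact (closure A).

Definition closed_conv_hull (R : realType) (Y : tvsType R) (S : set Y) : set Y :=
  \bigcap_(C in [set C : set Y | closed C /\ convex_set C /\ S `<=` C]) C.

Definition quasi_convex (R : realType) (Y : tvsType R) (psi : Y -> R) : Prop :=
  forall r : R, convex_set [set y : Y | psi y <= r].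

Definition convex_hull_like (R : realType) (E : topologicalType) (Y : tvsType R)
    (Omega : set E) (f : E -> Y) : Prop :=
  forall psi : Y -> R, continuous psi -> quasi_convex psi ->
    exists2 xs, boundary Omega xs &
      limf_esup (fun x => (psi (f x))%:E) (within Omega (nbhs xs))
      = ereal_sup [set (psi (f x))%:E | x in Omega].

Definition convex_hull_prop (R : realType) (E : topologicalType) (Y : tvsType R)
    (Omega : set E) (g : E -> Y) : Prop :=
  g @` Omega `<=` closed_conv_hull (g @` boundary Omega).

(* Main.v *)
Require Import Defs.
From HB Require Import structures.
From mathcomp Require Import all_boot all_order all_algebra.
From mathcomp Require Import all_classical all_reals all_analysis.
From mathcomp Require Import ring lra.
Set Implicit Arguments. Unset Strict Implicit. Unset Printing Implicit Defensive.
Import Order.TTheory GRing.Theory Num.Theory numFieldTopology.Exports.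
Local Open Scope classical_set_scope.
Local Open Scope ring_scope.



Lemma cvxP (R : realType) (Y : tvsType R) (C : set Y) (x y : Y) (l : R) :
  convex_set C -> C x -> C y -> 0 <= l -> l <= 1 ->
  C (l *: x + (1 - l) *: y).
Proof.
move=> cC Cx Cy l0 l1.
have := cC x y (Itv01 l0 l1) (mem_set Cx) (mem_set Cy).
by rewrite inE.
Qed.

Lemma cvxI (R : realType) (Y : tvsType R) (C : set Y) :
  (forall x y l, C x -> C y -> 0 <= l -> l <= 1 -> C (l *: x + (1 - l) *: y)) ->
  convex_set C.
Proof.
move=> h x y l /set_mem Cx /set_mem Cy; apply/mem_set.
exact: (h x y l%:num Cx Cy (ge0 l) (le1 l)).
Qed.

Definition gS (R : realType) (Y : tvsType R) (C : set Y) (z : Y) :=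
  [set t : R | 0 < t /\ C (t^-1 *: z)].
Definition gauge (R : realType) (Y : tvsType R) (C : set Y) (z : Y) :=
  inf (gS C z).

Lemma gS_lb (R : realType) (Y : tvsType R) (C : set Y) z : has_lbound (gS C z).
Proof. by exists 0 => t [/ltW]. Qed.

Lemma gauge_ge0 (R : realType) (Y : tvsType R) (C : set Y) z :
  gS C z !=set0 -> 0 <= gauge C z.
Proof. by move=> ne; apply: lb_le_inf => // t [/ltW]. Qed.

Lemma gauge_le (R : realType) (Y : tvsType R) (C : set Y) z t :
  gS C z t -> gauge C z <= t.
Proof. by move=> h; apply: ge_inf => //; exact: gS_lb. Qed.

Lemma gS_up (R : realType) (Y : tvsType R) (C : set Y) z t t' :
  convex_set C -> C 0 -> gS C z t -> t <= t' -> gS C z t'.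
Proof.
move=> cC C0 [t0 Ct] tt'.
have t'0 : 0 < t' by apply: lt_le_trans tt'.
split => //.
have l0 : 0 <= t / t' by rewrite divr_ge0 // ltW.
have l1 : t / t' <= 1 by rewrite ler_pdivrMr // mul1r.
have := cvxP cC Ct C0 l0 l1.
rewrite scaler0 addr0 scalerA.
suff -> : t / t' * t^-1 = t'^-1 by [].
by field; apply/andP; split; rewrite gt_eqF.
Qed.

Lemma gauge_lt (R : realType) (Y : tvsType R) (C : set Y) z t :
  convex_set C -> C 0 -> gS C z !=set0 -> gauge C z < t -> gS C z t.
Proof.
move=> cC C0 ne /(inf_lt ne) [s Ss st].
exact: (gS_up cC C0 Ss (ltW st)).
Qed.



Lemma scale_near (R : realType) (Y : tvsType R) (C : set Y) (r0 : R) (z : Y) :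
  open C -> C (r0 *: z) -> exists2 e : R, 0 < e & forall r, `|r0 - r| < e -> C (r *: z).
Proof.
move=> oC Cz.
have Cn : nbhs (r0 *: z) C by apply: open_nbhs_nbhs; split.
have /= := @scale_continuous R Y (r0, z) C Cn.
move=> [] B [B1 B2] BU.
move/nbhs_ballP: B1 => [e e0 He].
exists e => // r hr.
apply: (BU (r, z)); split => /=; last exact: nbhs_singleton.
by apply: He.
Qed.

Lemma gS_ne (R : realType) (Y : tvsType R) (C : set Y) z :
  open C -> C 0 -> gS C z !=set0.
Proof.
move=> oC C0.
have Cz0 : C (0 *: z) by rewrite scale0r.
have [e e0 He] := @scale_near R Y C 0 z oC Cz0.
exists (e / 2)^-1; split; first by rewrite invr_gt0 divr_gt0.
rewrite invrK; apply: He.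
by rewrite sub0r normrN ger0_norm ?divr_ge0 ?ltW // ltr_pdivrMr // ltr_pMr // ltr1n.
Qed.

Lemma gauge_lt1 (R : realType) (Y : tvsType R) (C : set Y) z :
  open C -> C z -> gauge C z < 1.
Proof.
move=> oC Cz.
have Cz1 : C (1 *: z) by rewrite scale1r.
have [e e0 He] := @scale_near R Y C 1 z oC Cz1.
have r1 : 1 < 1 + e / 2 by rewrite ltrDl divr_gt0.
apply: (@le_lt_trans _ _ (1 + e / 2)^-1).
  apply: gauge_le; split; first by rewrite invr_gt0 (lt_trans ltr01).
  rewrite invrK; apply: He.
  rewrite opprD addrA subrr sub0r normrN ger0_norm ?divr_ge0 ?ltW //.
  by rewrite ltr_pdivrMr // ltr_pMr // ltr1n.
by rewrite invf_lt1 // (lt_trans ltr01).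
Qed.

Lemma gauge_ge1 (R : realType) (Y : tvsType R) (C : set Y) z :
  open C -> convex_set C -> C 0 -> ~ C z -> 1 <= gauge C z.
Proof.
move=> oC cC C0 nCz; rewrite leNgt; apply/negP => h.
have [_] := gauge_lt cC C0 (gS_ne z oC C0) h.
by rewrite invr1 scale1r.
Qed.

Lemma gauge_sub (R : realType) (Y : tvsType R) (C : set Y) u v :
  open C -> convex_set C -> C 0 -> gauge C (u + v) <= gauge C u + gauge C v.
Proof.
move=> oC cC C0.
apply/ler_addgt0Pr => e e0.
have e2 : 0 < e / 2 by rewrite divr_gt0.
have h1 : gauge C u < gauge C u + e / 2 by rewrite ltrDl.
have h2 : gauge C v < gauge C v + e / 2 by rewrite ltrDl.
have [s [s0 Cs] ls] := inf_lt (gS_ne u oC C0) h1.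
have [t [t0 Ct] lt] := inf_lt (gS_ne v oC C0) h2.
apply: (@le_trans _ _ (s + t)); last first.
  have -> : gauge C u + gauge C v + e = (gauge C u + e / 2) + (gauge C v + e / 2) by field.
  by apply: lerD; apply: ltW.
apply: gauge_le; split; first by rewrite addr_gt0.
have st0 : 0 < s + t by rewrite addr_gt0.
have l0 : 0 <= s / (s + t) by rewrite divr_ge0 // ltW.
have l1 : s / (s + t) <= 1 by rewrite ler_pdivrMr // mul1r lerDl ltW.
have := cvxP cC Cs Ct l0 l1.
rewrite !scalerA scalerDr.
suff [-> ->] : s / (s + t) * s^-1 = (s + t)^-1 /\ (1 - s / (s + t)) * t^-1 = (s + t)^-1 by [].
split; field; rewrite ?gt_eqF //; apply/andP; split; rewrite gt_eqF //.
Qed.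

Lemma gauge_small (R : realType) (Y : tvsType R) (C : set Y) e :
  open C -> C 0 -> 0 < e ->
  nbhs (0 : Y) (fun w => gauge C w <= e /\ gauge C (- w) <= e).
Proof.
move=> oC C0 e0.
have Cn : nbhs (0 : Y) C by apply: open_nbhs_nbhs; split.
have e0n : e != 0 by rewrite gt_eqF.
have h1 := nbhs0Z e0n Cn.
have h2 := nbhs0N h1.
apply: filterS (filterI h1 h2) => w [[c Cc <-] [w' [c' Cc' <-] ew']].
have key : forall c0, C c0 -> gauge C (e *: c0) <= e.
  move=> c0 Cc0; apply: gauge_le; split => //.
  by rewrite scalerA mulVf ?gt_eqF // scale1r.
split; first exact: key.
by rewrite -ew' opprK; apply: key.
Qed.

Lemma gauge_cont (R : realType) (Y : tvsType R) (C : set Y) (k0 : Y) :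
  open C -> convex_set C -> C 0 -> continuous (fun z => gauge C (z - k0)).
Proof.
move=> oC cC C0 z0.
apply/cvgrPdist_le => e e0.
apply: filterS (nbhsT z0 (gauge_small oC C0 e0)) => _ [v [hv1 hv2] <-] /=.
rewrite [z0 + v - k0]addrAC.
have f1 := gauge_sub (z0 - k0) v oC cC C0.
have f2 := gauge_sub (z0 - k0 + v) (- v) oC cC C0.
rewrite addrK in f2.
rewrite ler_norml; apply/andP; split; lra.
Qed.

Lemma gauge_qc (R : realType) (Y : tvsType R) (C : set Y) (k0 : Y) :
  open C -> convex_set C -> C 0 -> quasi_convex (fun z => gauge C (z - k0)).
Proof.
move=> oC cC C0 r; apply: cvxI => x y l /= hx hy l0 l1.
apply/ler_addgt0Pr => e e0.
have r0 : 0 <= r by apply: le_trans hx; apply: gauge_ge0; apply: gS_ne.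
have hx' : gauge C (x - k0) < r + e by rewrite (le_lt_trans hx) // ltrDl.
have hy' : gauge C (y - k0) < r + e by rewrite (le_lt_trans hy) // ltrDl.
have [re0 Cx] := gauge_lt cC C0 (gS_ne _ oC C0) hx'.
have [_ Cy] := gauge_lt cC C0 (gS_ne _ oC C0) hy'.
apply: gauge_le; split => //.
have := cvxP cC Cx Cy l0 l1.
suff -> : (r + e)^-1 *: (l *: x + (1 - l) *: y - k0) =
  l *: ((r + e)^-1 *: (x - k0)) + (1 - l) *: ((r + e)^-1 *: (y - k0)) by [].
have -> : l *: x + (1 - l) *: y - k0 = l *: (x - k0) + (1 - l) *: (y - k0).
  rewrite !scalerBr addrACA -opprD -scalerDl.
  have -> : l + (1 - l) = 1 by ring.
  by rewrite scale1r.
by rewrite scalerDr !scalerA [l * _]mulrC [(1 - l) * _]mulrC.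
Qed.



Lemma limsup_le (E : topologicalType) (R : realType) (f : E -> R)
  (F : set_system E) (FF : Filter F) (l : R) :
  f @ F --> l -> (limf_esup (fun x => (f x)%:E) F <= l%:E)%E.
Proof.
move=> fl; apply/lee_addgt0Pr => e e0.
apply: ge_ereal_inf.
exists (ereal_sup ((fun x => (f x)%:E) @` [set x | f x < l + e])).
  exists [set x | f x < l + e] => //.
  have le : l < l + e by rewrite ltrDl.
  exact: (cvgr_lt l fl _ le).
apply: ge_ereal_sup => _ [x hx <-].
by rewrite -EFinD lee_fin ltW.
Qed.

Lemma limsup_ge (E : topologicalType) (R : realType) (f : E -> R)
  (A : set E) (x : E) (l : R) :
  closure A x -> f @ within A (nbhs x) --> l ->
  (l%:E <= limf_esup (fun x => (f x)%:E) (within A (nbhs x)))%E.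
Proof.
move=> Ax fl; apply: le_ereal_inf_tmp => _ [V hV <-].
apply/lee_addgt0Pr => e e0.
have le : l - e < l by rewrite ltrBlDr ltrDl.
have FW : Filter (within A (nbhs x)) by apply: within_filter.
have hW := @cvgr_gt _ _ _ FW _ l fl _ le.
have [t [At Wt]] := Ax _ (filterI hV hW).
have [Vt lt] := Wt At.
have : ((f t)%:E <= ereal_sup ((fun x => (f x)%:E) @` V))%E.
  by apply: ereal_sup_ubound; exists t.
move=> h.
rewrite -leeBlDr //.
rewrite -EFinB (le_trans _ h) // lee_fin ltW //.
Qed.

Lemma cch_closed (R : realType) (Y : tvsType R) (S : set Y) :
  closed (closed_conv_hull S).
Proof. by apply: closed_bigI => C [cC _]. Qed.

Lemma cch_convex (R : realType) (Y : tvsType R) (S : set Y) :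
  convex_set (closed_conv_hull S).
Proof.
apply: cvxI => x y l hx hy l0 l1 C hC.
have [_ [cvC _]] := hC.
exact: cvxP cvC (hx C hC) (hy C hC) l0 l1.
Qed.

Lemma cch_sub (R : realType) (Y : tvsType R) (S : set Y) :
  S `<=` closed_conv_hull S.
Proof. by move=> s Ss C [_ [_ SC]]; exact: SC. Qed.

Lemma cch_min (R : realType) (Y : tvsType R) (S C : set Y) :
  closed C -> convex_set C -> S `<=` C -> closed_conv_hull S `<=` C.
Proof. by move=> cC vC SC x hx; apply: hx. Qed.

Lemma separation (R : realType) (Y : tvsType R) (K : set Y) (k0 y : Y) :
  closed K -> convex_set K -> K k0 -> ~ K y ->
  exists psi : Y -> R, [/\ continuous psi, quasi_convex psi,
    (forall k, K k -> psi k < 1) & 1 <= psi y].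
Proof.
move=> clK cvK Kk0 nKy.
have [B cvB [Bo Bb]] := @locally_convex R Y.
have nK : nbhs y (~` K) by apply: open_nbhs_nbhs; split => //; rewrite openC.
have [U [BU Uy] UK] := Bb y _ nK.
have oU : open U := Bo _ BU.
have cvU : convex_set U := cvB _ (mem_set BU).
pose U2 := [set u : Y | U (y - k0 + u)].
have cvU2 : convex_set U2.
  apply: cvxI => u1 u2 l hu1 hu2 l0 l1.
  have key : forall c : Y, l *: (c + u1) + (1 - l) *: (c + u2) = c + (l *: u1 + (1 - l) *: u2).
    move=> c; rewrite !scalerDr addrACA -scalerDl.
    have -> : l + (1 - l) = 1 by ring.
    by rewrite scale1r.
  have := cvxP cvU hu1 hu2 l0 l1.
  by rewrite key.
pose C := [set w : Y | exists2 k, K k & U2 (k - w)].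
have C0 : C 0 by exists k0 => //; rewrite /U2 /= subr0 subrK.
have oC : open C.
  rewrite openE => w [k Kk Uk].
  rewrite /interior.
  have E : forall X, y - k0 + (k - X) = (y - k0 + k) - X by move=> X; rewrite addrA.
  have nU : nbhs ((y - k0 + k) - w) U by rewrite -E; apply: open_nbhs_nbhs; split.
  have := nbhsB (y - k0 + k) (nbhsN_subproof (@scale_continuous R Y) nU).
  rewrite opprB addrC subrK.
  apply: filterS => _ [_ [u Uu <-] <-].
  exists k => //; rewrite /U2 /= E.
  by rewrite opprB addrC subrK.
have cvC : convex_set C.
  apply: cvxI => w1 w2 l [k1 K1 U1] [k2 K2 U2'] l0 l1.
  exists (l *: k1 + (1 - l) *: k2); first exact: cvxP.
  have := cvxP cvU2 U1 U2' l0 l1.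
  by rewrite !scalerBr addrACA opprD.
exists (fun z => gauge C (z - k0)); split.
- exact: gauge_cont.
- exact: gauge_qc.
- move=> k Kk; apply: gauge_lt1 => //.
  by exists k => //; rewrite /U2 /= opprB [k + _]addrC !subrK.
- apply: gauge_ge1 => // -[k Kk].
  rewrite /U2 /= addrC subrK => Uk.
  exact: (UK k Uk Kk).
Qed.



Unset Implicit Arguments.
Theorem proposition3 (R : realType) (E : topologicalType) (Y : tvsType R)
    (Omega : set E) (g : E -> Y) :
  open Omega -> Omega !=set0 -> relatively_compact Omega ->
  boundary Omega !=set0 -> hausdorff_space Y ->
  {within closure Omega, continuous g} ->
  (convex_hull_like Omega g <-> convex_hull_prop Omega g).
Proof.
move=> oO neO rcO [xb bxb] hY hg.
have bcl : boundary Omega `<=` closure Omega by move=> x [].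
have gcv : forall x, closure Omega x -> g @ within (closure Omega) (nbhs x) --> g x.
  by move/subspace_continuousP: hg.
have pgcv : forall psi : Y -> R, continuous psi -> forall x, closure Omega x ->
   (fun z => psi (g z)) @ within Omega (nbhs x) --> psi (g x).
  move=> psi hpsi x hx.
  apply: (@cvg_comp _ _ _ g psi _ (nbhs (g x))); last exact: hpsi.
  apply: cvg_trans (gcv x hx).
  apply: cvg_fmap2; apply: within_subset => //; exact: subset_closure.
split.
- move=> h1 _ [x0 Ox0 <-].
  apply: contrapT => nK.
  have [psi [pc pq pK py]] := separation (@cch_closed R Y (g @` boundary Omega))
     (@cch_convex R Y _) (cch_sub (imageP g bxb)) nK.
  have [xs bxs heq] := h1 psi pc pq.
  have lt1 := pK _ (cch_sub (imageP g bxs)).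
  have h2 := @limsup_le _ _ _ _ (within_filter _ _) _ (pgcv psi pc xs (bcl _ bxs)).
  rewrite heq in h2; have {}h2 := h2 (nbhs_filter xs).
  have h3 : ((psi (g x0))%:E <= ereal_sup [set (psi (g x))%:E | x in Omega])%E.
    by apply: ereal_sup_ubound; exists x0.
  have := le_trans h3 h2; rewrite lee_fin => h4.
  lra.
- move=> h2 psi pc pq.
  have cb : closed (boundary Omega).
    rewrite /boundary setDE; apply: closedI; first exact: closed_closure.
    by rewrite closedC; exact: open_interior.
  have cpb : compact (boundary Omega) := subclosed_compact cb rcO bcl.
  have hpg : {within closure Omega, continuous (psi \o g)}.
    apply/subspace_continuousP => x hx.
    exact: cvg_comp (gcv x hx) (pc (g x)).
  have hpb := continuous_subspaceW bcl hpg.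
  have [xs /set_mem bxs hmax] := compact_EVT_max (ex_intro _ xb bxb) cpb hpb.
  exists xs => //.
  have A1 : (ereal_sup [set (psi (g x))%:E | x in Omega] <= (psi (g xs))%:E)%E.
    apply: ge_ereal_sup => _ [x Ox <-]; rewrite lee_fin.
    have : closed_conv_hull (g @` boundary Omega) (g x) := h2 _ (imageP g Ox).
    move/(@cch_min R Y _ [set z | psi z <= psi (g xs)]); apply.
    + apply: (@preimage_closed _ _ psi [set r | r <= psi (g xs)]).
        by move=> z _; exact: pc.
      exact: closed_le.
    + exact: pq.
    + by move=> _ [b bb <-]; exact: (hmax b (mem_set bb)).
  have A2 := limsup_ge (bcl _ bxs) (pgcv psi pc xs (bcl _ bxs)).
  have A3 : (limf_esup (fun x => (psi (g x))%:E) (within Omega (nbhs xs)) <=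
      ereal_sup [set (psi (g x))%:E | x in Omega])%E.
    apply: ge_ereal_inf.
    exists (ereal_sup [set (psi (g x))%:E | x in Omega]) => //.
    exists Omega => //.
    by rewrite /within /=; apply: nearW.
  apply: le_anti; rewrite A3 /=.
  exact: le_trans A1 A2.
Qed.
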